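(* Let $s>2$ be an integer, $A_s=\{0,1,\dots,s-1\}$, and let $A_0,A_1$ be disjoint subsets of $A_s$ with $A_0\cup A_1=A_s$, $A_0\neq A_s\neq A_1$. Let $f:[0,1]\to[0,1]$ be defined by $$f\big(\Delta^{s*}_{\alpha_1\alpha_2\dots\alpha_n\dots}\big)=\Delta^{2*}_{\beta_1\beta_2\dots\beta_n\dots},$$ where $\beta_1=0$ if $\alpha_1\in A_0$, $\beta_1=1$ if $\alpha_1\in A_1$, and for $n\ge 1$, $\beta_{n+1}=\beta_n$ if $\alpha_{n+1}=\alpha_n$ and $\beta_{n+1}=1-\beta_n$ if $\alpha_{n+1}\neq\alpha_n$. Then: (i) the range of $f$ is $f([0,1])=[0,1]$; (ii) the image under $f$ of every $s*$-cylinder $\Delta^{s*}_{c_1\dots c_m}$ is a $2*$-cylinder; (iii) $f$ has finite level sets and level sets of the cardinality of the continuum, i.e. there exists $y\in[0,1]$ with $f^{-1}(y)$ nonempty and finite, and there exists $y\in[0,1]$ with $f^{-1}(y)$ of cardinality of the continuum.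
   Context: $L_s=A_s\times A_s\times\cdots$ denotes the space of sequences $(\alpha_n)$ with $\alpha_n\in A_s$. The $s*$-representation is an encoding of $[0,1]$ topologically equivalent to the classical $s$-adic one: there is a continuous strictly monotone surjection $h_s:[0,1]\to[0,1]$ such that $\Delta^{s*}_{\alpha_1\alpha_2\dots}=h_s\big(\sum_{n\ge1}\alpha_n s^{-n}\big)$ for every $(\alpha_n)\in L_s$; a sequence $(\alpha_n)$ with $x=\Delta^{s*}_{\alpha_1\alpha_2\dots}$ is called an $s*$-code of $x$. Likewise the $2*$-representation is given by a continuous strictly monotone surjection $h_2:[0,1]\to[0,1]$ via $\Delta^{2*}_{\beta_1\beta_2\dots}=h_2\big(\sum_{n\ge1}\beta_n 2^{-n}\big)$, $\beta_n\in\{0,1\}$. An $s*$-cylinder of rank $m$ with base $c_1\dots c_m$ is $\Delta^{s*}_{c_1\dots c_m}=\{\Delta^{s*}_{c_1\dots c_m\alpha_1\alpha_2\dots}:(\alpha_n)\in L_s\}$; $2*$-cylinders $\Delta^{2*}_{\beta_1\dots\beta_m}$ are defined analogously. The value of $f(x)$ given by the formula does not depend on which $s*$-code of $x$ is used, so $f$ is a well-defined function on $[0,1]$. *)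

(* Defs.v *)
From mathcomp Require Import all_boot all_order all_algebra.
From mathcomp Require Import all_classical all_reals all_analysis.
Set Implicit Arguments. Unset Strict Implicit. Unset Printing Implicit Defensive.
Import Order.TTheory GRing.Theory Num.Theory numFieldNormedType.Exports.
Local Open Scope ring_scope.
Local Open Scope classical_set_scope.

(* Digit sequences are indexed from 0: a n stands for alpha_{n+1}. *)
Definition digits (s : nat) (a : nat -> nat) : Prop := forall n, (a n < s)%N.

Definition sadic {R : realType} (s : nat) (a : nat -> nat) : R :=
  limn (series (fun n => (a n)%:R / (s%:R ^+ n.+1) : R)).

Definition prepend (c : seq nat) (a : nat -> nat) : nat -> nat :=
  fun n => if (n < size c)%N then nth 0%N c n else a (n - size c)%N.

Definition star_cyl {R : realType} (h : R -> R) (s : nat) (c : seq nat) : set R :=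
  [set x | exists a, digits s a /\ x = h (sadic s (prepend c a))].

(* beta n stands for beta_{n+1}; A1 is the set of digits mapped to 1 *)
Fixpoint beta (A1 : set nat) (a : nat -> nat) (n : nat) : nat :=
  match n with
  | 0 => if `[< A1 (a 0%N) >] then 1%N else 0%N
  | n'.+1 => if a n'.+1 == a n' then beta A1 a n' else (1 - beta A1 a n')%N
  end.

Definition rep_map {R : realType} (h : R -> R) : Prop :=
  {within `[0, 1]%classic, continuous h} /\
  ({in `[0, 1]%classic &, {mono h : x y / x < y}} \/
   {in `[0, 1]%classic &, {mono h : x y /~ x < y}}) /\
  h @` `[0, 1]%classic = `[0, 1]%classic.

(* Main.v *)
Require Import Defs.
From mathcomp Require Import all_boot all_order all_algebra.
From mathcomp Require Import all_classical all_reals all_analysis.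
Import Order.TTheory GRing.Theory Num.Theory.
Local Open Scope ring_scope.
Local Open Scope classical_set_scope.
From mathcomp Require Import ring lra zify.
Import numFieldNormedType.Exports.

Module Helpers.
Set Implicit Arguments. Unset Strict Implicit.

Section Sadic.
Variable R : realType.
Variable s : nat.
Hypothesis s1 : (1 < s)%N.

Definition term (a : nat -> nat) := (fun n => (a n)%:R / (s%:R ^+ n.+1) : R).
Definition Ssum (a : nat -> nat) n := series (term a) n.

Lemma s_gt0 : 0 < s%:R :> R.
Proof. by rewrite ltr0n; apply: leq_trans s1. Qed.

Lemma spow_gt0 n : 0 < s%:R ^+ n :> R.
Proof. exact: exprn_gt0 s_gt0. Qed.

Lemma S0 a : Ssum a 0 = 0.
Proof. by rewrite /Ssum /series /= big_geq. Qed.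

Lemma SS a n : Ssum a n.+1 = Ssum a n + (a n)%:R / (s%:R ^+ n.+1).
Proof. by rewrite /Ssum seriesSr. Qed.

Lemma inv_pow n : (s%:R ^+ n)^-1 = s%:R / (s%:R ^+ n.+1) :> R.
Proof.
rewrite exprS invfM mulrA mulfV ?mul1r // pnatr_eq0 -lt0n; exact: leq_trans s1.
Qed.

Lemma S_step a n : digits s a ->
  Ssum a n.+1 + (s%:R ^+ n.+1)^-1 <= Ssum a n + (s%:R ^+ n)^-1.
Proof.
move=> da; rewrite SS -addrA lerD2l (inv_pow n).
rewrite -[X in _ + X]mul1r -mulrDl natr1.
rewrite ler_wpM2r ?invr_ge0 ?(ltW (spow_gt0 _)) // ler_nat; exact: da.
Qed.

Lemma S_ge a n : 0 <= term a n.
Proof. by rewrite /term divr_ge0 // ltW // spow_gt0. Qed.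

Lemma S_nd a : nondecreasing_seq (Ssum a).
Proof.
apply/nondecreasing_seqP => n; rewrite SS lerDl; exact: S_ge.
Qed.

Lemma S_tail a n m : digits s a -> (n <= m)%N ->
  Ssum a m + (s%:R ^+ m)^-1 <= Ssum a n + (s%:R ^+ n)^-1.
Proof.
move=> da; elim: m => [|m IH]; first by rewrite leqn0 => /eqP ->.
rewrite leq_eqVlt => /orP[/eqP -> //|]; rewrite ltnS => /IH.
exact/le_trans/S_step.
Qed.

Lemma S_le1 a m : digits s a -> Ssum a m <= 1 - (s%:R ^+ m)^-1.
Proof.
move=> da; have := S_tail da (leq0n m); rewrite S0 expr0 invr1 add0r.
by rewrite lerBrDr.
Qed.

Lemma S_cvg a : digits s a -> cvgn (Ssum a).
Proof.
move=> da; apply: nondecreasing_is_cvgn; first exact: S_nd.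
exists 1 => _ [m _ <-]; apply: le_trans (S_le1 m da) _.
by rewrite lerBlDr lerDl invr_ge0 ltW // spow_gt0.
Qed.

Lemma sadic_bounds a n : digits s a ->
  Ssum a n <= sadic s a <= Ssum a n + (s%:R ^+ n)^-1.
Proof.
move=> da; apply/andP; split.
  exact: (nondecreasing_cvgn_le (S_nd a) (S_cvg da)).
apply: limr_le; first exact: S_cvg da.
near=> m; have: (n <= m)%N by near: m; exact: nbhs_infty_ge.
move=> /(S_tail da); apply: le_trans; rewrite lerDl invr_ge0 ltW // spow_gt0.
Unshelve. all: by end_near. Qed.

Lemma sadic_unique a u : digits s a ->
  (forall n, Ssum a n <= u <= Ssum a n + (s%:R ^+ n)^-1) -> sadic s a = u.
Proof.
move=> da hu; apply: cvg_lim => //.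
apply: (@squeeze_cvgr _ _ _ _ (fun n => u - (s%:R ^+ n)^-1) (fun=> u)).
  near=> n; have /andP[h1 h2] := hu n; apply/andP; split => //.
  by rewrite lerBlDr.
- rewrite -[X in _ --> X]subr0; apply: cvgB; first exact: cvg_cst.
  under eq_fun do rewrite -exprVn.
  apply: cvg_expr; rewrite ger0_norm ?invr_ge0 ?ltW ?s_gt0 //.
  by rewrite invf_lt1 ?s_gt0 // ltr1n.
- exact: cvg_cst.
Unshelve. all: by end_near. Qed.


Lemma sadic_one : @sadic R s (fun=> s.-1) = 1.
Proof.
have da : digits s (fun=> s.-1) by move=> n; rewrite prednK ?ltnSn // (leq_trans _ s1).
have E n : Ssum (fun=> s.-1) n + (s%:R ^+ n)^-1 = 1.
  elim: n => [|n IH]; first by rewrite S0 expr0 invr1 add0r.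
  rewrite SS -addrA -[X in _ + (_ + X)]mul1r -mulrDl natr1 prednK ?(leq_trans _ s1) //.
  by rewrite -inv_pow.
apply: sadic_unique => // n; have := ltW (spow_gt0 n); rewrite -invr_ge0.
move: (E n); set p := _^-1; set q := Ssum _ n => e hp; apply/andP; split; lra.
Qed.

Lemma sadic_surj u : 0 <= u <= 1 -> exists a, digits s a /\ @sadic R s a = u.
Proof.
move=> /andP[u0 u1]; have [->|ult1] := eqVneq u 1.
  exists (fun=> s.-1); split; last exact: sadic_one.
  by move=> n; rewrite prednK ?ltnSn // (leq_trans _ s1).
have {u1 ult1} ult1 : u < 1 by rewrite lt_neqAle ult1.
pose F n := Num.truncn (s%:R ^+ n * u).
have pu n : 0 <= s%:R ^+ n * u by rewrite mulr_ge0 // ltW // spow_gt0.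
have Fi n : (F n)%:R <= s%:R ^+ n * u < (F n).+1%:R by exact: truncn_itv.
have Fge n : (s * F n <= F n.+1)%N.
  rewrite /F truncn_ge_nat // natrM exprS -mulrA ler_wpM2l ?(ltW s_gt0) //.
  by case/andP: (Fi n).
have Flt n : (F n.+1 < s * F n + s)%N.
  rewrite /F truncn_lt_nat // -mulnSr natrM exprS -mulrA ltr_pM2l ?s_gt0 //.
  by case/andP: (Fi n).
pose a n := (F n.+1 - s * F n)%N.
have da : digits s a.
  by move=> n; rewrite /a ltn_subLR // addnC.
have SF n : Ssum a n = (F n)%:R / s%:R ^+ n.
  elim: n => [|n IH].
    rewrite S0 expr0 divr1 /F expr0 mul1r.
    suff -> : Num.truncn u = 0%N by [].
    by apply/eqP; rewrite truncn_eq // u0 /= ult1.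
  rewrite SS IH /a natrB // natrM.
  have h0 : s%:R ^+ n != 0 :> R by rewrite gt_eqF // spow_gt0.
  have h1 : s%:R != 0 :> R by rewrite gt_eqF // s_gt0.
  rewrite exprS; field; by rewrite h0 h1.
exists a; split => //; apply: sadic_unique => // n.
have hp := spow_gt0 n.
rewrite SF; case/andP: (Fi n) => h1 h2; apply/andP; split.
  by rewrite ler_pdivrMr // mulrC.
have -> : (F n)%:R / s%:R ^+ n + (s%:R ^+ n)^-1 = (F n).+1%:R / s%:R ^+ n :> R.
  by rewrite -natr1 mulrDl mul1r.
by rewrite ler_pdivlMr // mulrC ltW.
Qed.


Lemma sadic_01 a : digits s a -> 0 <= @sadic R s a <= 1.
Proof.
move=> da; have := sadic_bounds 0 da; rewrite S0 expr0 invr1 add0r.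
by [].
Qed.

Lemma S_ge0 a n : 0 <= Ssum a n.
Proof. by rewrite -(S0 a); apply: (S_nd a). Qed.

Lemma sadic_zero a : digits s a -> @sadic R s a = 0 -> forall n, a n = 0%N.
Proof.
move=> da e n; have /andP[h _] := sadic_bounds n.+1 da.
rewrite e SS in h.
have h2 : (a n)%:R / s%:R ^+ n.+1 <= 0 :> R.
  by apply: le_trans h; rewrite lerDr S_ge0.
apply/eqP; rewrite -(@pnatr_eq0 R) eq_le ler0n andbT.
by rewrite pmulr_lle0 // in h2; rewrite invr_gt0 spow_gt0.
Qed.

Lemma sadic_cst0 : @sadic R s (fun=> 0%N) = 0.
Proof.
have da : digits s (fun=> 0%N) by move=> n; exact: leq_trans s1.
have E n : Ssum (fun=> 0%N) n = 0.
  by elim: n => [|n IH]; rewrite ?S0 // SS IH mul0r addr0.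
apply: sadic_unique => // n; by rewrite E add0r lexx invr_ge0 (ltW (spow_gt0 _)).
Qed.

Lemma S_eq a b m : (forall i, (i < m)%N -> a i = b i) -> Ssum a m = Ssum b m.
Proof.
move=> h; rewrite /Ssum /series /=; apply: eq_big_nat => i /andP[_ hi].
by rewrite /term h.
Qed.

Lemma sadic_lt a b m : digits s a -> digits s b ->
  (forall i, (i < m)%N -> a i = b i) ->
  ((a m * s + a m.+1).+1 < b m * s + b m.+1)%N -> @sadic R s a < @sadic R s b.
Proof.
move=> da db hab hlt.
have /andP[_ ha] := sadic_bounds m.+2 da.
have /andP[hb _] := sadic_bounds m.+2 db.
apply: (le_lt_trans ha); apply: (lt_le_trans _ hb).
rewrite !SS (S_eq hab) -!addrA !ltrD2l.
have hq := spow_gt0 m.+2.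
have hs := s_gt0.
move: hlt; rewrite -addn1 -(ltr_nat R) !natrD !natrM => hlt.
have e1 : (a m)%:R / s%:R ^+ m.+1 + ((a m.+1)%:R / s%:R ^+ m.+2 + (s%:R ^+ m.+2)^-1)
   = ((a m)%:R * s%:R + (a m.+1)%:R + 1) / s%:R ^+ m.+2 :> R.
  rewrite [s%:R ^+ m.+2]exprS; field.
  by rewrite (gt_eqF hs) (gt_eqF (spow_gt0 m.+1)).
have e2 : (b m)%:R / s%:R ^+ m.+1 + (b m.+1)%:R / s%:R ^+ m.+2
   = ((b m)%:R * s%:R + (b m.+1)%:R) / s%:R ^+ m.+2 :> R.
  rewrite [s%:R ^+ m.+2]exprS; field.
  by rewrite (gt_eqF hs) (gt_eqF (spow_gt0 m.+1)).
rewrite e1 e2 ltr_pM2r ?invr_gt0 //.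
Qed.

End Sadic.

Lemma R_bits (R : realType) : exists phi : R -> nat -> bool, injective phi.
Proof.
exists (fun x n => if @unpickle rat n is Some q then ratr q < x else false).
move=> x y e; apply/eqP; rewrite eq_le; apply/andP; split; rewrite leNgt; apply/negP => h.
- have [q] := rat_in_itvoo h; rewrite in_itv /= => /andP[h1 h2].
  have := congr1 (fun g => g (pickle q)) e; rewrite /= pickleK.
  by rewrite h2 ltNge (ltW h1).
- have [q] := rat_in_itvoo h; rewrite in_itv /= => /andP[h1 h2].
  have := congr1 (fun g => g (pickle q)) e; rewrite /= pickleK.
  by rewrite h2 ltNge (ltW h1).
Qed.


Section Beta.
Variable A1 : set nat.

Lemma beta_le1 a n : (beta A1 a n <= 1)%N.
Proof.
elim: n => [|n IH] /=; first by case: asboolP.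
by case: ifP => // _; rewrite leq_subr.
Qed.

Lemma beta_prefix a b n : (forall i, (i <= n)%N -> a i = b i) ->
  beta A1 a n = beta A1 b n.
Proof.
elim: n => [|n IH] h /=; first by rewrite h.
rewrite !h // IH // => i hi; apply: h; exact: leqW.
Qed.

Lemma prepend_digits s c a : all (fun d => (d < s)%N) c -> digits s a ->
  digits s (prepend c a).
Proof.
move=> /all_nthP hc da n; rewrite /prepend; case: ifP => h; last exact: da.
exact: hc.
Qed.

Lemma prepend_nil a : prepend [::] a = a.
Proof. by apply: funext => n; rewrite /prepend /= subn0. Qed.

Variables (s k0 k1 : nat) (c : seq nat) (T : nat -> nat).

Fixpoint build n := match n with
  | 0 => if (0 < size c)%N then nth 0%N c 0 else (if T 0 == 1%N then k1 else k0)
  | n'.+1 => if (n'.+1 < size c)%N then nth 0%N c n'.+1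
             else if T n'.+1 == T n' then build n' else ((build n').+1 %% s)%N
  end.

Hypotheses (s1 : (1 < s)%N) (k0s : (k0 < s)%N) (k1s : (k1 < s)%N)
  (k0A : ~ A1 k0) (k1A : A1 k1) (cs : all (fun d => (d < s)%N) c)
  (T1 : forall n, (T n <= 1)%N)
  (Tc : forall n, (n < size c)%N -> T n = beta A1 (prepend c (fun=> 0%N)) n).

Lemma build_c n : (n < size c)%N -> build n = nth 0%N c n.
Proof. by case: n => [|n] /= ->. Qed.

Lemma build_lt n : (build n < s)%N.
Proof.
have hc := all_nthP 0%N cs.
elim: n => [|n IH] /=.
  case: ifP => [h|_]; first exact: hc.
  by case: ifP.
case: ifP => [h|_]; first exact: hc.
case: ifP => // _; rewrite ltn_mod; exact: leq_trans s1.
Qed.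

Lemma build_beta_c n : (n < size c)%N -> beta A1 build n = T n.
Proof.
move=> hn; rewrite Tc //; apply: beta_prefix => i hi.
by rewrite build_c ?(leq_ltn_trans hi) // /prepend (leq_ltn_trans hi).
Qed.

Lemma modS_neq x : (x < s)%N -> ((x.+1 %% s)%N == x) = false.
Proof.
move=> xs; rewrite leq_eqVlt in xs; case/orP: xs => [/eqP e|xs].
  by rewrite e modnn; apply/negbTE; rewrite eq_sym -lt0n; move: s1; rewrite -e ltnS.
by rewrite modn_small // (gtn_eqF (ltnSn x)).
Qed.

Lemma build_beta n : beta A1 build n = T n.
Proof.
elim: n => [|n IH].
  have [hn|hn] := ltnP 0 (size c); first exact: build_beta_c.
  rewrite /= ltnNge hn /=; have [->|h] := eqVneq (T 0) 1%N.
    by case: asboolP.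
  case: asboolP => // _; have := T1 0; move: h; case: (T 0) => [|[|]] //.
have [hn|hn] := ltnP n.+1 (size c); first exact: build_beta_c.
rewrite /= ltnNge hn /= -/(build n) -/(beta A1 build n) IH.
have [->|h] := eqVneq (T n.+1) (T n); first by rewrite eqxx.
rewrite modS_neq ?build_lt //.
have := T1 n; have := T1 n.+1; move: h.
by case: (T n.+1) => [|[|]] //; case: (T n) => [|[|]].
Qed.

End Beta.


Section Rep.
Variable R : realType.
Implicit Types (h : R -> R) (x y : R).

Lemma rep_in h x : rep_map h -> 0 <= x <= 1 -> 0 <= h x <= 1.
Proof.
move=> [_ [_ e]] hx.
have : (h @` `[0, 1]%classic) (h x) by exists x => //; rewrite set_itvcc.
by rewrite e set_itvcc.
Qed.

Lemma rep_surj h y : rep_map h -> 0 <= y <= 1 -> exists2 x, 0 <= x <= 1 & h x = y.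
Proof.
move=> [_ [_ e]] hy.
have : `[0, 1]%classic y by rewrite set_itvcc.
by rewrite -e => -[x hx hxy]; exists x => //; move: hx; rewrite set_itvcc.
Qed.

Lemma rep_inj h x y : rep_map h -> 0 <= x <= 1 -> 0 <= y <= 1 -> h x = h y -> x = y.
Proof.
move=> [_ [m _]] hx hy e.
have hx' : x \in `[0, 1]%classic by rewrite set_itvcc in_setE.
have hy' : y \in `[0, 1]%classic by rewrite set_itvcc in_setE.
apply/eqP; rewrite eq_le !leNgt; apply/andP; split; apply/negP => lt.
- case: m => m.
    by have := m y x hy' hx'; rewrite lt e ltxx.
  by have := m x y hx' hy'; rewrite lt e ltxx.
- case: m => m.
    by have := m x y hx' hy'; rewrite lt e ltxx.
  by have := m y x hy' hx'; rewrite lt e ltxx.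
Qed.
End Rep.

End Helpers.
Import Helpers.


Theorem theorem2 (R : realType) (s : nat) (A0 A1 : set nat)
  (hs h2 : R -> R) (f : R -> R) :
  (2 < s)%N ->
  A0 `&` A1 = set0 ->
  A0 `|` A1 = [set n | (n < s)%N] ->
  A0 <> [set n | (n < s)%N] -> A1 <> [set n | (n < s)%N] ->
  rep_map hs -> rep_map h2 ->
  (forall a, digits s a -> f (hs (sadic s a)) = h2 (sadic 2 (beta A1 a))) ->
  (* (i) *)
  f @` `[0, 1]%classic = `[0, 1]%classic /\
  (* (ii) *)
  (forall c : seq nat, all (fun d => (d < s)%N) c ->
     exists b : seq nat, all (fun d => (d < 2)%N) b /\
       f @` star_cyl hs s c = star_cyl h2 2 b) /\
  (* (iii) *)
  (exists y, y \in `[0, 1]%classic /\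
     let L := [set x | x \in `[0, 1]%classic /\ f x = y] in
     L !=set0 /\ finite_set L) /\
  (exists y, y \in `[0, 1]%classic /\
     ([set x | x \in `[0, 1]%classic /\ f x = y] #= [set: R])%card).
Proof.
move=> s2 hdisj hun hA0 hA1 rs r2 hf.
have s1 : (1 < s)%N by apply: ltnW.
have t1 : (1 < 2)%N by [].
have [k0 k0A] : exists k0, A0 k0.
  apply: contrapT => /forallNP h; apply: hA1; transitivity (A0 `|` A1); last exact: hun.
  by apply/seteqP; split => x; [right | case => // /h].
have [k1 k1A] : exists k1, A1 k1.
  apply: contrapT => /forallNP h; apply: hA0; transitivity (A0 `|` A1); last exact: hun.
  by apply/seteqP; split => x; [left | case => // /h].
have k0s : (k0 < s)%N.
  have : (A0 `|` A1) k0 by left.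
  by rewrite hun.
have k1s : (k1 < s)%N.
  have : (A0 `|` A1) k1 by right.
  by rewrite hun.
have k0A1 : ~ A1 k0.
  move=> h; have : (A0 `&` A1) k0 by [].
  by rewrite hdisj.
have bin n a : (beta A1 a n < 2)%N by rewrite ltnS beta_le1.
have cyl : forall c, all (fun d => (d < s)%N) c ->
    f @` star_cyl hs s c = star_cyl h2 2 (mkseq (beta A1 (prepend c (fun=> 0%N))) (size c)).
  move=> c hc; set b := mkseq _ _.
  have sb : size b = size c by rewrite size_mkseq.
  apply/seteqP; split.
    move=> _ [_ [a [da ->]] <-]; rewrite hf; last exact: prepend_digits.
    exists (fun n => beta A1 (prepend c a) (n + size c)%N); split.
      by move=> n; exact: bin.
    congr (h2 (sadic 2 _)); apply: funext => n; rewrite {2}/prepend sb.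
    case: ifP => hn; last by rewrite subnK // leqNgt hn.
    rewrite nth_mkseq //; apply: beta_prefix => i hi.
    by rewrite /prepend (leq_ltn_trans hi hn).
  move=> _ [t [dt ->]].
  set T := prepend b t.
  have T1 n : (T n <= 1)%N.
    rewrite /T /prepend; case: ifP => hn; last by rewrite -ltnS dt.
    by rewrite nth_mkseq -?sb // beta_le1.
  have Tc n : (n < size c)%N -> T n = beta A1 (prepend c (fun=> 0%N)) n.
    by move=> hn; rewrite /T /prepend sb hn nth_mkseq.
  pose g := build s k0 k1 c T.
  have gc : prepend c (fun n => g (n + size c)%N) = g.
    apply: funext => n; rewrite /prepend; case: ifP => hn.
      by rewrite /g build_c.
    by rewrite subnK // leqNgt hn.
  have dg : digits s (fun n => g (n + size c)%N).
    by move=> n; apply: build_lt.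
  exists (hs (sadic s (prepend c (fun n => g (n + size c)%N)))).
    by exists (fun n => g (n + size c)%N).
  rewrite hf; last exact: prepend_digits.
  rewrite gc; congr (h2 (sadic 2 _)); apply: funext => n.
  exact: build_beta.
rewrite set_itvcc.
have inS a : digits s a -> 0 <= hs (sadic s a) <= 1.
  by move=> da; apply: rep_in rs _; exact: sadic_01.
have in2 t : digits 2 t -> 0 <= h2 (sadic 2 t) <= 1.
  by move=> dt; apply: rep_in r2 _; exact: sadic_01.
have db a : digits 2 (beta A1 a) by move=> n; exact: bin.
split.
  apply/seteqP; split.
    move=> _ [x hx <-]; have [u hu <-] := rep_surj rs hx.
    have [a [da <-]] := sadic_surj s1 hu.
    by rewrite /= hf //; exact: in2.
  move=> y hy; have [v hv <-] := rep_surj r2 hy.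
  have [t [dt <-]] := sadic_surj t1 hv.
  have : star_cyl h2 2 [::] (h2 (sadic 2 t)) by exists t; rewrite prepend_nil.
  rewrite -(cyl [::] isT) => -[x [a [da ->]] <-].
  exists (hs (sadic s (prepend [::] a))) => //.
  by rewrite prepend_nil; exact: inS.
split.
  move=> c hc; eexists; split; last exact: cyl.
  by apply/allP => d /mapP[i _ ->].
split.
  have c0 : sadic 2 (fun=> 0%N) = 0 :> R by apply: sadic_cst0.
  have bk0 : beta A1 (fun=> k0) = fun=> 0%N.
    apply: funext; elim => [|n IH] /=; first by rewrite asboolF.
    by rewrite eqxx.
  exists (h2 0); split.
    by rewrite in_setE; apply: rep_in r2 _; rewrite lexx ler01.
  move=> L; split.
    exists (hs (sadic s (fun=> k0))); split.
      by rewrite in_setE; apply: inS.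
    by rewrite hf // bk0 c0.
  apply: (@sub_finite_set _ _ ((fun k => hs (sadic s (fun=> k))) @` `I_s)); last first.
    exact/finite_image/finite_II.
  move=> x [hx e]; move: hx; rewrite in_setE => hx.
  have [u hu hux] := rep_surj rs hx.
  have [a [da hau]] := sadic_surj s1 hu.
  move: e; rewrite -hux -hau hf // => e.
  have e' := rep_inj r2 (sadic_01 _ t1 (db a)) _ e.
  have z := sadic_zero t1 (db a) (e' ltac:(by rewrite lexx ler01)).
  have ca n : a n = a 0%N.
    elim: n => [//|n IH]; have := z n.+1; rewrite /= (z n).
    by case: eqP => [->|].
  exists (a 0%N); first exact: da.
  by congr (hs (sadic s _)); apply: funext => n; rewrite ca.
pose p := if k0 == 0%N then 1%N else 0%N.
pose q := if k0 == 2%N then 1%N else 2%N.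
have H (k : nat) : [&& ((if k == 0%N then 1%N else 0%N) < (if k == 2%N then 1%N else 2%N))%N,
     (if k == 0%N then 1%N else 0%N) != k & (if k == 2%N then 1%N else 2%N) != k].
  by case: k => [|[|[|]]].
have /and3P[pq /negbTE pk /negbTE qk] := H k0.
rewrite -/p -/q in pq pk qk.
have qs : (q < s)%N by rewrite /q; case: ifP => _; lia.
pose fam (t : nat -> bool) n := if odd n then (if t n./2 then q else p) else k0.
have dfam t : digits s (fam t).
  move=> n; rewrite /fam; case: ifP => _ //; case: ifP => _ //; exact: ltn_trans pq qs.
pose alt n := nat_of_bool (odd n).
have bfam t : beta A1 (fam t) = alt.
  apply: funext; elim => [|n IH] /=; first by rewrite /fam /= asboolF.
  rewrite -/(beta A1 (fam t) n) IH /alt /fam /=.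
  by case: (odd n) => /=; case: (t _) => //=; rewrite ?pk ?qk // eq_sym ?pk ?qk.
have fam_inj t t' : sadic s (fam t) = sadic s (fam t') :> R -> t = t'.
  move=> e; apply: funext => i; elim/ltn_ind: i => i IH.
  apply: contrapT => ne.
  have agree j : (j < i.*2.+1)%N -> fam t j = fam t' j.
    move=> hj; rewrite /fam; case: ifP => oj //.
    have hj' : (j < i.*2)%N.
      rewrite ltn_neqAle -ltnS hj andbT; apply/negP => /eqP ej.
      by move: oj; rewrite ej odd_double.
    by rewrite IH // ltn_half_double.
  have hm : odd i.*2.+1 /\ (i.*2.+1)./2 = i /\ odd i.*2.+2 = false.
    split; first by rewrite /= odd_double.
    split; last by rewrite /= odd_double.
    exact: (half_bit_double i true).
  have key (u v : nat -> bool) : u i = false -> v i = true ->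
      (forall j, (j < i.*2.+1)%N -> fam u j = fam v j) ->
      sadic s (fam u) < sadic s (fam v) :> R.
    move=> hu hv ag; apply: (sadic_lt R s1 (dfam u) (dfam v) ag).
    rewrite /fam; case: hm => -> [-> ->]; rewrite hu hv.
    have : (p.+1 * s <= q * s)%N by rewrite leq_mul2r pq orbT.
    lia.
  move: ne; case et : (t i); case et' : (t' i) => // _.
  - by have := key t' t et' et (fun j hj => esym (agree j hj)); rewrite e ltxx.
  - by have := key t t' et et' agree; rewrite e ltxx.
have [phi phiI] := R_bits R.
pose y := h2 (sadic 2 alt).
have dalt : digits 2 alt by move=> n; rewrite /alt; case: odd.
exists y; split; first by rewrite in_setE; exact: in2.
pose g x := hs (sadic s (fam (phi x))).
have gL : g @` [set: R] `<=` [set x | x \in [set z | 0 <= z <= 1] /\ f x = y].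
  move=> _ [x _ <-]; split; first by rewrite in_setE; exact: inS.
  by rewrite /g hf // bfam.
have gI : injective g.
  move=> x x' e; apply: phiI; apply: fam_inj.
  exact: rep_inj rs (sadic_01 _ s1 (dfam _)) (sadic_01 _ s1 (dfam _)) e.
have e1 := inj_card_eq (in2W gI : {in [set: R] &, injective g}).
rewrite card_eq_le; apply/andP; split; first exact: card_leT.
apply: card_le_trans (subset_card_le gL).
by move: (card_esym e1); rewrite card_eq_le => /andP[].
Qed.
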